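(* Let $H$ be a one-dimensional summable Hamiltonian. Then for every $k\in\mathbb{N}$ (with $k\ge1$) and every $X\in\{0,1\}^{\mathbb{Z}}$, $$\rho_H(X)=\liminf_{m\to\infty}\frac{H(X([-mk,mk]))}{2mk+1}.$$
   Context: A pattern is a configuration in $\{0,1\}^A$ on a finite set $A\subset\mathbb{Z}$; a one-dimensional Hamiltonian is a translation-invariant assignment of energies $\Phi(p)$ to patterns $p$, and for a finite segment $w$ of a sequence, $H(w)$ is the total energy of all patterns occurring within $w$. $H$ is summable if there is $M>0$ such that for every $i\in\mathbb{Z}$, $\sum_{p\in P_i}|\Phi(p)|<M$, where $P_i$ is the set of finite patterns whose support contains the coordinate $i$. The energy density is $\rho_H(X)=\liminf_{n\to\infty}\frac{H(X([-n,n]))}{2n+1}$, where $X([-n,n])=(X(i))_{i=-n}^n$. *)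

(* Defs.v *)
From HB Require Import structures.
From mathcomp Require Import all_boot all_order all_algebra.
From mathcomp Require Import finmap.
From mathcomp Require Import all_classical all_reals.
From mathcomp Require Import topology normedtype sequences esum.
Set Implicit Arguments. Unset Strict Implicit. Unset Printing Implicit Defensive.
Import Order.TTheory GRing.Theory Num.Theory.

Local Open Scope fset_scope.
Local Open Scope fmap_scope.
Local Open Scope ring_scope.

(* A pattern: a configuration in {0,1}^A on a finite set A of integers,
   encoded as a finite map int -> bool with domain A (0 = false, 1 = true). *)
Definition pattern := {fmap int -> bool}.

Definition restr (X : int -> bool) (A : {fset int}) : pattern :=
  [fmap x : A => X (val x)].

Definition is_translate (p q : pattern) (t : int) : Prop :=
  forall x : int, q.[? (x + t)] = p.[? x].

Definition translation_invariant (R : realType) (Phi : pattern -> R) : Prop :=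
  forall (p q : pattern) (t : int), is_translate p q t -> Phi q = Phi p.

Definition summable_ham (R : realType) (Phi : pattern -> R) : Prop :=
  exists M : R, 0 < M /\
    forall i : int,
      (\esum_(p in [set p : pattern | i \in domf p]) (`|Phi p|)%:E < M%:E)%E.

Definition segment (a : int) (N : nat) : {fset int} :=
  seq_fset tt [seq a + i%:Z | i <- iota 0 N].

(* H(X([a, a+N-1])): total energy of the (nonempty) patterns occurring
   within the segment X([a, a+N-1]), i.e. of the restrictions X|_A for
   nonempty A contained in the segment. *)
Definition energy (R : realType) (Phi : pattern -> R) (X : int -> bool)
    (a : int) (N : nat) : R :=
  \sum_(A <- fpowerset (segment a N) | A != fset0) Phi (restr X A).

Definition energy_sym (R : realType) (Phi : pattern -> R) (X : int -> bool)
    (n : nat) : R :=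
  energy Phi X (- n%:Z) (n.*2.+1).

Definition energy_density (R : realType) (Phi : pattern -> R)
    (X : int -> bool) : \bar R :=
  limn_einf (fun n : nat => (energy_sym Phi X n / (n.*2.+1)%:R)%:E).

(* Main.v *)
Require Import Defs.
From HB Require Import structures.
From mathcomp Require Import all_boot all_order all_algebra.
From mathcomp Require Import finmap.
From mathcomp Require Import all_classical all_reals.
From mathcomp Require Import topology normedtype sequences esum.
From mathcomp Require Import ereal zify ring lra.
Import Order.TTheory GRing.Theory Num.Theory.
Local Open Scope ring_scope.
Local Open Scope fset_scope.

Lemma restr_dom X A : domf (restr X A) = A.
Proof. by []. Qed.

Lemma key (R : realType) (Phi : pattern -> R) (M : R)
  (hM : forall i : int,
      (\esum_(p in [set p : pattern | i \in domf p]) (`|Phi p|)%:E < M%:E)%E)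
  X (s : seq {fset int}) (i : int) : uniq s ->
  \sum_(A <- s | i \in A) `|Phi (restr X A)| <= M.
Proof.
move=> us.
rewrite -big_filter -(big_map (restr X) xpredT (fun p => `|Phi p|)).
set r := map _ _.
have ur : uniq r.
  rewrite map_inj_in_uniq ?filter_uniq // => A B _ _ /(congr1 (fun f : pattern => domf f)).
  by rewrite !restr_dom.
rewrite -lee_fin -sumEFin.
apply: le_trans (ltW (hM i)).
rewrite fsbig_seq //; apply: esum_ge; exists [set` r]%classic => //; split; first exact: finite_seq.
move=> p /= /mapP [A]; rewrite mem_filter => /andP [iA _] ->.
by rewrite restr_dom.
Qed.

Lemma bound (R : realType) (Phi : pattern -> R) (M : R)
  (hM : forall i : int,
      (\esum_(p in [set p : pattern | i \in domf p]) (`|Phi p|)%:E < M%:E)%E)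
  X (s : seq {fset int}) (P : pred {fset int}) (S : seq int) :
  uniq s -> (forall A, A \in s -> P A -> has (fun i => i \in A) S) ->
  `|\sum_(A <- s | P A) Phi (restr X A)| <= (size S)%:R * M.
Proof.
move=> us hS.
apply: le_trans (ler_norm_sum _ _ _) _.
apply: (@le_trans _ _ (\sum_(A <- s | P A) \sum_(i <- S | i \in A) `|Phi (restr X A)|)).
  rewrite big_seq_cond [X in _ <= X]big_seq_cond.
  apply: ler_sum => A /andP [As PA].
  have /hasP [i iS iA] := hS A As PA.
  rewrite (big_rem i iS) /= iA lerDl.
  by apply: sumr_ge0 => j _.
rewrite (exchange_big_dep xpredT) //=.
have -> : (size S)%:R * M = \sum_(i <- S) M.
  elim: S {hS} => [|x S IH]; first by rewrite big_nil mul0r.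
  by rewrite big_cons -IH /= -addn1 natrD mulrDl mul1r addrC.
apply: ler_sum => i _.
have K := @key _ _ _ hM X _ i us.
apply: le_trans K.
rewrite [X in _ <= X](bigID P) /=.
rewrite (@eq_bigl _ _ _ _ _ _ (fun A => (i \in A) && P A)); last by move=> A; rewrite andbC.
rewrite lerDl.
by apply: sumr_ge0 => j _.
Qed.

Definition EE (R : realType) (Phi : pattern -> R) X (T : {fset int}) : R :=
  \sum_(A <- fpowerset T | A != fset0) Phi (restr X A).
Arguments EE {R}.

Lemma EE_bound (R : realType) (Phi : pattern -> R) (M : R)
  (hM : forall i : int,
      (\esum_(p in [set p : pattern | i \in domf p]) (`|Phi p|)%:E < M%:E)%E)
  X T : `|EE Phi X T| <= #|` T|%:R * M.
Proof.
apply: (@bound _ _ _ hM X _ _ (enum_fset T)); first exact: fset_uniq.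
move=> A; rewrite fpowersetE => AT /fset0Pn [x xA].
by apply/hasP; exists x => //; apply: (fsubsetP AT).
Qed.

Lemma EE_diff (R : realType) (Phi : pattern -> R) (M : R)
  (hM : forall i : int,
      (\esum_(p in [set p : pattern | i \in domf p]) (`|Phi p|)%:E < M%:E)%E)
  X S T : S `<=` T -> `|EE Phi X T - EE Phi X S| <= #|` T `\` S|%:R * M.
Proof.
move=> ST.
have -> : EE Phi X T - EE Phi X S =
   \sum_(A <- fpowerset T | (A != fset0) && ~~ (A `<=` S)) Phi (restr X A).
  rewrite /EE (bigID (fun A => A `<=` S)) /=.
  have -> : \sum_(A <- fpowerset S | A != fset0) Phi (restr X A) =
     \sum_(A <- fpowerset T | (A != fset0) && (A `<=` S)) Phi (restr X A).
    rewrite big_mkcond [in RHS]big_mkcond /=.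
    rewrite (@eq_big_seq _ _ _ _ (fpowerset S) _ (fun A => if (A != fset0) && (A `<=` S) then Phi (restr X A) else 0)); last first.
      by move=> A; rewrite fpowersetE => ->; rewrite andbT.
    apply: big_fset_incl; first by rewrite fpowersetS.
    by move=> A _; rewrite fpowersetE => /negbTE ->; rewrite andbF.
  by rewrite addrAC subrr add0r.
apply: (@bound _ _ _ hM X _ _ (enum_fset (T `\` S))); first exact: fset_uniq.
move=> A; rewrite fpowersetE => AT /andP [_ /fsubsetPn [x xA xS]].
apply/hasP; exists x => //.
by rewrite in_fsetD xS (fsubsetP AT).
Qed.

Lemma mem_segment a N x : (x \in segment a N) = (a <= x < a + N%:Z)%R.
Proof.
rewrite /segment seq_fsetE; apply/mapP/idP.
  move=> [i]; rewrite mem_iota add0n => /andP [_ iN] ->.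
  apply/andP; split; lia.
move=> /andP [ax xa]; exists `|x - a|%N.
  rewrite mem_iota add0n /=; lia.
lia.
Qed.

Lemma card_segment a N : #|` segment a N| = N.
Proof.
rewrite /segment size_seq_fset undup_id ?size_map ?size_iota //.
rewrite map_inj_uniq ?iota_uniq // => i j /addrI; lia.
Qed.
Local Open Scope ring_scope.

Lemma alg (R : realFieldType) (x y P1 d M k : R) : 0 < P1 -> 0 <= d -> d <= k -> 0 <= M ->
  `|x - y| <= 2*d*M -> `|y| <= P1 * M ->
  `|x/(P1 + 2*d) - y/P1| * (P1 + 2*d) <= 4*k*M.
Proof.
move=> P0 d0 dk M0 hxy hy.
have Q0 : 0 < P1 + 2 * d by lra.
have e : (x/(P1+2*d) - y/P1)*(P1+2*d) = (x-y) - (y/P1)*(2*d).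
  by field; apply/andP; split; rewrite gt_eqF.
rewrite -[X in _ * X <= _](gtr0_norm Q0) -normrM e.
have hy' : `|y / P1| <= M.
  by rewrite normrM normfV (gtr0_norm P0) ler_pdivrMr // mulrC.
apply: le_trans (ler_normB _ _) _.
rewrite normrM (ger0_norm (_ : 0 <= 2 * d)); last lra.
have : `|y / P1| * (2 * d) <= M * (2 * d) by apply: ler_wpM2r => //; lra.
nra.
Qed.

Local Close Scope fset_scope.

Theorem lemma4p6 (R : realType) (Phi : pattern -> R) :
  translation_invariant Phi -> summable_ham Phi ->
  forall (k : nat), (1 <= k)%N ->
  forall X : int -> bool,
    energy_density Phi X =
    limn_einf (fun m : nat =>
      (energy_sym Phi X (m * k) / ((m * k).*2.+1)%:R)%:E).
Proof.
move=> _ [M [M0 hM]] k k1 X.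
set a := fun n : nat => energy_sym Phi X n / (n.*2.+1)%:R.
have hE : forall n, energy_sym Phi X n = EE Phi X (segment (- n%:Z) (n.*2.+1)) by [].
have Hb : forall n, `|energy_sym Phi X n| <= (n.*2.+1)%:R * M.
  move=> n; rewrite hE.
  by have := @EE_bound _ _ _ hM X (segment (- n%:Z) (n.*2.+1)); rewrite card_segment.
have Hd : forall n p, (p <= n)%N ->
    `|energy_sym Phi X n - energy_sym Phi X p| <= 2 * (n - p)%:R * M.
  move=> n p pn; rewrite !hE.
  have sub : (segment (- p%:Z) (p.*2.+1) `<=` segment (- n%:Z) (n.*2.+1))%fset.
    apply/fsubsetP => x; rewrite !mem_segment -!muln2 => /andP[h1 h2].
    apply/andP; split; lia.
  have := @EE_diff _ _ _ hM X _ _ sub; rewrite cardfsDS // !card_segment.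
  have -> : (n.*2.+1 - p.*2.+1 = 2 * (n - p))%N by rewrite -!muln2; lia.
  by rewrite natrM.
have F : forall n, `|a n - a (n %/ k * k)%N| * (n.*2.+1)%:R <= 4 * k%:R * M.
  move=> n; set p := (n %/ k * k)%N.
  have pn : (p <= n)%N by rewrite /p leq_trunc_div.
  have pk : (n - p <= k)%N.
    have := divn_eq n k; have := ltn_pmod n k1; rewrite /p; lia.
  have e : (n.*2.+1)%:R = (p.*2.+1)%:R + 2 * (n-p)%:R :> R.
    rewrite -natrM -natrD; congr _%:R; rewrite -!muln2; lia.
  rewrite /a e; apply: alg.
  - by rewrite ltr0n.
  - exact: ler0n.
  - by rewrite ler_nat.
  - exact: ltW.
  - exact: Hd.
  - exact: Hb.
have LE : forall w : nat -> \bar R, limn_einf w = ereal_sup (range (einfs w)).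
  move=> w; rewrite limn_einf_lim; apply/cvg_lim => //; exact: cvg_einfs_sup.
rewrite /energy_density !LE.
apply/eqP; rewrite eq_le; apply/andP; split.
  apply: ge_ereal_sup => _ [m _ <-]; apply: le_ereal_sup_tmp.
  eexists; first by exists m.
  apply: le_ereal_inf_tmp => _ [j /= mj <-]; apply: ereal_inf_lbound.
  exists (j * k)%N => //=.
  exact: leq_trans mj (leq_pmulr j k1).
apply/lee_addgt0Pr => e e0.
apply: ge_ereal_sup => _ [m _ <-].
set B := Num.bound (4 * k%:R * M / e).
have hB : 4 * k%:R * M < B%:R * e.
  rewrite -ltr_pdivrMr //; apply: archi_boundP.
  apply: divr_ge0; last exact: ltW.
  by apply: mulr_ge0; [rewrite mulr_ge0 | exact: ltW].
set N := (m * k + B)%N.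
apply: (@le_trans _ _ (einfs (fun n => (a n)%:E) N + e%:E)); last first.
  by apply: leeD2r; apply: ereal_sup_ubound; exists N.
rewrite -leeBlDr //; apply: le_ereal_inf_tmp => _ [n Nn <-]; rewrite leeBlDr //.
apply: (@le_trans _ _ ((a (n %/ k * k)%N)%:E)).
  apply: ereal_inf_lbound; exists (n %/ k)%N => //=.
  rewrite leq_divRL //; apply: leq_trans Nn; exact: leq_addr.
rewrite lee_fin.
have hF := F n.
have hBn : (B%:R : R) <= (n.*2.+1)%:R.
  have Nn' : (m * k + B <= n)%N := Nn.
  rewrite ler_nat -muln2; lia.
have hN : (0 : R) < (n.*2.+1)%:R by rewrite ltr0n.
have : `|a n - a (n %/ k * k)%N| <= e.
  rewrite -(ler_pM2r hN); apply: (le_trans hF); apply: ltW; apply: (lt_le_trans hB).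
  by rewrite mulrC ler_pM2l.
rewrite ler_norml; lra.
Qed.
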